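(* Let $n$ be a power of 2 and $A\subseteq\{0,1\}^{\log n}$ arbitrary. For every $\epsilon>0$, $P_A=\{x\in\{0,1\}^n:\exists y\in A,\ x=h(y)\}$ has a classical nonadaptive property tester with distance parameter $\epsilon$ and one-sided error making $O(1/\epsilon+\log n)$ queries.
   Context: Logarithms are base 2; positions $i$ are identified with vectors in $\mathbb{F}_2^{\log n}$ and $h(y)_i=y\cdot i$ over $\mathbb{F}_2$ (Hadamard code). $x$ is $\epsilon$-far from $P$ if it differs from every element of $P$ in more than $\epsilon n$ positions. A classical property tester with distance parameter $\epsilon$ accepts every $x\in P$ with probability $\ge 2/3$ and every $\epsilon$-far $x$ with probability $\le 1/3$; one-sided error means elements of $P$ are accepted with probability $1$; nonadaptive means the query positions are chosen independently of previous answers. *)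

(* Defs.v *)
From HB Require Import structures.
From mathcomp Require Import all_boot all_order all_algebra.
From mathcomp Require Import reals.
Set Implicit Arguments. Unset Strict Implicit. Unset Printing Implicit Defensive.
Import Order.TTheory GRing.Theory Num.Theory.
Local Open Scope ring_scope.

(* Positions of a word of length n = 2^k are vectors of F_2^k = {0,1}^k. *)
Definition pos (k : nat) := {ffun 'I_k -> bool}.
Definition word (k : nat) := {ffun pos k -> bool}.

Definition dotF2 (k : nat) (y i : pos k) : bool :=
  \big[addb/false]_(j < k) (y j && i j).

Definition hadamard (k : nat) (y : pos k) : word k := [ffun i => dotF2 y i].

Definition P_A (k : nat) (A : {set pos k}) : {set word k} :=
  [set x | [exists y in A, x == hadamard y]].

Definition hdist (k : nat) (x z : word k) : nat := #|[set i | x i != z i]|.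

Definition far (R : realType) (k : nat) (eps : R) (P : {set word k}) (x : word k) :=
  forall z, z \in P -> eps * (2 ^ k)%:R < (hdist x z)%:R.

(* A classical nonadaptive tester making q queries: random seed o drawn from a
   finite probability space (Om, w); the seed determines the q query positions
   Q o and the decision D o applied to the vector of answers. *)
Definition accept_prob (R : realType) (k q : nat) (Om : finType) (w : Om -> R)
    (Q : Om -> 'I_q -> pos k) (D : Om -> {ffun 'I_q -> bool} -> bool)
    (x : word k) : R :=
  \sum_(o : Om) w o * (D o [ffun j => x (Q o j)])%:R.

Definition one_sided_nonadaptive_tester (R : realType) (k : nat)
    (P : {set word k}) (eps : R) (q : nat) : Prop :=
  exists (Om : finType) (w : Om -> R) (Q : Om -> 'I_q -> pos k)
         (D : Om -> {ffun 'I_q -> bool} -> bool),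
    [/\ forall o, 0 <= w o,
        \sum_(o : Om) w o = 1,
        forall x, x \in P -> accept_prob w Q D x = 1
      & forall x, far eps P x -> accept_prob w Q D x <= 3^-1].

(* Main.v *)
Require Import Defs.
From HB Require Import structures.
From mathcomp Require Import all_boot all_order all_algebra.
From mathcomp Require Import reals.
From mathcomp Require Import ring lra.
Import Order.TTheory GRing.Theory Num.Theory.
Local Open Scope ring_scope.

Definition unitv {k : nat} (a : 'I_k) : pos k := [ffun j => j == a].

Lemma dot_unitv k (y : pos k) (a : 'I_k) : dotF2 y (unitv a) = y a.
Proof.
rewrite /dotF2 (bigD1 a) //= ffunE eqxx andbT big1 ?addbF //.
by move=> j /negbTE ja; rewrite ffunE ja andbF.
Qed.

Lemma bern_ineq (R : realFieldType) (t : R) (m : nat) :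
  0 <= t -> t <= 1 -> (1 - t) ^+ m * (1 + m%:R * t) <= 1.
Proof.
move=> t0 t1; elim: m => [|m IH]; first by rewrite expr0 mul0r addr0 mulr1.
have p0 : 0 <= (1 - t) ^+ m by apply: exprn_ge0; lra.
rewrite exprSr -mulrA.
apply: le_trans IH; apply: ler_wpM2l => //.
rewrite -natr1; have m0 : 0 <= m%:R :> R by [].
have : 0 <= (m%:R + 1) * (t * t) by apply: mulr_ge0; [lra | nra].
move=> h.
have -> : (1 - t) * (1 + (m%:R + 1) * t) = 1 + m%:R * t - (m%:R + 1) * (t * t) by ring.
lra.
Qed.

Lemma sum_bool (R : realType) (T : finType) (c : R) (b : pred T) :
  \sum_(o : T) c * (b o : nat)%:R = c * (#|[pred o | b o]|)%:R.
Proof.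
rewrite -mulr_sumr; congr (_ * _); rewrite -natr_sum; congr (_%:R).
rewrite -sum1_card [RHS]big_mkcond /=; apply: eq_bigr => o _.
by rewrite inE; case: (b o).
Qed.

Lemma card_pos k : #|pos k| = (2 ^ k)%N.
Proof. by rewrite /pos card_ffun card_bool card_ord. Qed.

Definition Qt {k m : nat} (o : {ffun 'I_m -> pos k}) (j : 'I_(k + m)) : pos k :=
  match split j with inl a => unitv a | inr b => o b end.

Definition Dt {k m : nat} (A : {set pos k}) (o : {ffun 'I_m -> pos k})
    (ans : {ffun 'I_(k + m) -> bool}) : bool :=
  ([ffun a => ans (lshift m a)] \in A) &&
  [forall b, ans (rshift k b) == dotF2 [ffun a => ans (lshift m a)] (o b)].

Definition wt (R : realType) {k m : nat} (o : {ffun 'I_m -> pos k}) : R :=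
  (#|{ffun 'I_m -> pos k}|%:R)^-1.

Lemma Dt_eq k m (A : {set pos k}) (o : {ffun 'I_m -> pos k}) (x : word k) :
  Dt A o [ffun j => x (Qt o j)] =
  ([ffun a => x (unitv a)] \in A) &&
  [forall b, x (o b) == dotF2 [ffun a => x (unitv a)] (o b)].
Proof.
rewrite /Dt.
have -> : [ffun a => [ffun j => x (Qt o j)] (lshift m a)] = [ffun a => x (unitv a)].
  apply/ffunP => a; rewrite !ffunE /Qt.
  by have := unsplitK (inl _ a) => /= ->.
congr (_ && _); apply: eq_forallb => b; rewrite ffunE /Qt.
by have := unsplitK (inr _ b) => /= ->.
Qed.

Lemma card_Om k m : #|{ffun 'I_m -> pos k}| = ((2 ^ k) ^ m)%N.
Proof. by rewrite card_ffun card_pos card_ord. Qed.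

Lemma wt_sum (R : realType) k m : \sum_(o : {ffun 'I_m -> pos k}) @wt R k m o = 1.
Proof.
rewrite /wt sumr_const card_Om -(mulr_natr (((2 ^ k) ^ m)%:R^-1)) mulVf //.
by rewrite pnatr_eq0 -lt0n !expn_gt0.
Qed.

Lemma complete (R : realType) k m (A : {set pos k}) (x : word k) :
  x \in P_A A -> accept_prob (@wt R k m) (fun o => Qt o) (fun o => Dt A o) x = 1.
Proof.
rewrite inE => /existsP [y /andP [yA /eqP ->]].
have yx : [ffun a => hadamard y (unitv a)] = y.
  by apply/ffunP => a; rewrite !ffunE dot_unitv.
rewrite /accept_prob -[RHS](wt_sum R k m); apply: eq_bigr => o _.
rewrite Dt_eq yx yA /=.
have -> : [forall b, hadamard y (o b) == dotF2 y (o b)] = true.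
  by apply/forallP => b; rewrite ffunE.
by rewrite mulr1.
Qed.

Lemma sound (R : realType) k m (A : {set pos k}) (x : word k) (eps : R) :
  far eps (P_A A) x -> (1 < eps \/ 2 <= m%:R * eps) ->
  accept_prob (@wt R k m) (fun o => Qt o) (fun o => Dt A o) x <= 3^-1.
Proof.
move=> farx hm.
rewrite /accept_prob.
under eq_bigr => o _ do rewrite Dt_eq /wt.
set yx := [ffun a => x (unitv a)].
case yA : (yx \in A); last first.
  by rewrite big1 ?invr_ge0 ?ler0n // => o _; rewrite /= mulr0.
rewrite sum_bool.
set S := [set i | x i != hadamard yx i].
have zP : hadamard yx \in P_A A.
  by rewrite inE; apply/existsP; exists yx; rewrite yA eqxx.
have far1 := farx _ zP.
have hd : hdist x (hadamard yx) = #|S| by [].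
rewrite hd in far1.
have -> : #|[pred o : {ffun 'I_m -> pos k} | true && [forall b, x (o b) == dotF2 yx (o b)]]|
    = (#|~: S| ^ m)%N.
  rewrite -[in RHS](card_ord m) -card_ffun_on; apply: eq_card => o.
  rewrite !inE /=; apply/forallP/ffun_onP => H b; move: (H b);
  by rewrite !inE ffunE ?negbK.
have dle : (#|S| <= 2 ^ k)%N by rewrite -card_pos; exact: max_card.
have -> : #|~: S| = (2 ^ k - #|S|)%N.
  by have := cardsC S; rewrite card_pos => <-; rewrite addKn.
rewrite card_Om [((2 ^ k) ^ m)%:R]natrX [((2 ^ k - #|S|) ^ m)%:R]natrX natrB //.
set N := (2 ^ k)%:R : R.
set D := #|S|%:R : R.
have N0 : 0 < N by rewrite ltr0n expn_gt0.
rewrite -exprVn -exprMn mulrC.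
have -> : (N - D) * N^-1 = 1 - D / N by field; rewrite gt_eqF.
have t0 : 0 <= D / N by rewrite divr_ge0 ?ler0n // ltW.
have t1 : D / N <= 1 by rewrite ler_pdivrMr // mul1r /D /N ler_nat.
have te : eps < D / N by rewrite ltr_pdivlMr.
set t := D / N in t0 t1 te *.
have B := @bern_ineq R t m t0 t1.
have p0 : 0 <= (1 - t) ^+ m. by apply: exprn_ge0; lra.
case: hm => [e1|me]; first lra.
have m0 : 0 <= m%:R :> R by [].
have mt : 2 <= m%:R * t.
  apply: le_trans me _; apply: ler_wpM2l => //; exact: ltW.
set u := m%:R * t in mt B *.
set p := (1 - t) ^+ m in B p0 *.
have h3 : 3 <= 1 + u by lra.
have := ler_wpM2l p0 h3 => h.
have h' : p * 3 <= 1 by lra.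
lra.
Qed.

Theorem mainTheorem4 (R : realType) :
  exists C : R, forall (k : nat) (A : {set pos k}) (eps : R), 0 < eps ->
    exists q : nat, q%:R <= C * (eps^-1 + k%:R) /\
      one_sided_nonadaptive_tester (P_A A) eps q.
Proof.
exists 3 => k A eps e0.
have ie0 : 0 < eps^-1 by rewrite invr_gt0.
have hi : eps * eps^-1 = 1 by rewrite mulfV // gt_eqF.
have k0 : 0 <= k%:R :> R by [].
case: (lerP eps 1) => e1.
- have x0 : 0 <= 2 / eps by rewrite divr_ge0 // ltW.
  have h1 : (Num.trunc (2 / eps))%:R <= 2 / eps by rewrite -truncn_ge_nat.
  have h2 : 2 / eps < (Num.trunc (2 / eps)).+1%:R by rewrite -truncn_lt_nat.
  set m := (Num.trunc (2 / eps)).+1.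
  exists (k + m)%N; split.
    have ige1 : 1 <= eps^-1 by nra.
    rewrite natrD /m -natr1.
    rewrite /m in h2; lra.
  exists {ffun 'I_m -> pos k}, (@wt R k m), (fun o => Qt o), (fun o => Dt A o).
  split.
  + by move=> o; rewrite /wt invr_ge0 ler0n.
  + exact: wt_sum.
  + exact: complete.
  + move=> x fx; apply: sound fx _; right.
    have : 2 < m%:R * eps by rewrite -ltr_pdivrMr.
    lra.
- exists (k + 0)%N; split.
    rewrite addn0; clear hi; lra.
  exists {ffun 'I_0 -> pos k}, (@wt R k 0), (fun o => Qt o), (fun o => Dt A o).
  split.
  + by move=> o; rewrite /wt invr_ge0 ler0n.
  + exact: wt_sum.
  + exact: complete.
  + by move=> x fx; apply: sound fx _; left.
Qed.
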